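(* Let $G$ be a well-shaped mesh in $d$ dimensions with maximum degree $b$, and let $G_p=(V_p,E_p)\subseteq G$ be an induced subgraph. The output $G_{px}=(V_{px},E_{px})$, $G_{py}=(V_{py},E_{py})$ of FullyBalancedPartition$(G_p)$ is a fully-balanced $f$-partition of $G_p$ with $f(N)=O(N^{1-1/d})$; that is, $|E(G_{px},G_{py})|\le f(|V_p|)$, $|V_{px}|=|V_{py}|\pm O(1)$, and $|\mathrm{outgoing}(G_{px})|=|\mathrm{outgoing}(G_{py})|\pm O(1)$.
   Context: A well-shaped mesh in $d$ dimensions ($d>1$ constant) is the graph of a decomposition of a domain in $\mathbb{R}^d$ into interior-disjoint simplices meeting only in lower-dimensional simplices, each with aspect ratio bounded by a fixed constant; it has bounded degree $b$. Asymptotic constants may depend on $d$, $b$ and the aspect-ratio bound. For a partition of $G_p$ into $G_{px},G_{py}$, $\mathrm{outgoing}(G_{px})=E(G_{px},G-G_p)$ is the set of edges from vertices of $G_{px}$ to vertices of $G$ outside $G_p$, similarly for $G_{py}$. Geometric separator step: the randomized algorithm of Miller, Teng, Thurston and Vavasis, applied to an induced subgraph $H$ with vertex set $V_H$, repeatedly draws a random sphere separator and accepts once the resulting partition of $V_H$ has both parts of size at most $\beta|V_H|$ with $\beta=(d+1+\epsilon)/(d+2)$ (fixed $0<\epsilon<1$) and at most $c|V_H|^{1-1/d}$ crossing edges. A decomposition tree of $H$ is obtained by applying this separator to $H$ and recursively to each part until parts are single vertices; its leaves are ordered left to right. FullyBalancedPartition$(G_p)$: (1) build such a decomposition tree $T$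 of $G_p$; (2) form a red-blue array by listing the vertices $v$ of $G_p$ in left-to-right leaf order of $T$, writing a blue element for $v$ followed by $|E(v,G-G_p)|$ red elements; (3) find a contiguous subarray containing half the blue elements to within one and half the red elements to within one; let $V_{px}$ be the vertices whose blue elements lie in the subarray and $V_{py}=V_p\setminus V_{px}$; (4) let $G_{px},G_{py}$ be the induced subgraphs. *)

(* Defs.v *)
From HB Require Import structures.
From mathcomp Require Import all_boot all_order all_algebra.
From mathcomp Require Import reals exp.
Set Implicit Arguments. Unset Strict Implicit. Unset Printing Implicit Defensive.
Import Order.TTheory GRing.Theory Num.Theory.
Local Open Scope ring_scope.

Section Mesh.
Variables (R : realType) (d : nat) (T : finType).

Definition dist2 (x y : 'rV[R]_d) : R := \sum_(i < d) (x 0 i - y 0 i) ^+ 2.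

Definition conv (pos : T -> 'rV[R]_d) (s : {set T}) : 'rV[R]_d -> Prop :=
  fun x => exists lam : T -> R,
    [/\ forall v, 0 <= lam v, forall v, v \notin s -> lam v = 0,
        \sum_v lam v = 1 & x = \sum_v lam v *: pos v].

(* aspect ratio (radius of a containing ball / radius of an inscribed ball)
   of the simplex s is at most alpha *)
Definition aspect_le (pos : T -> 'rV[R]_d) (alpha : R) (s : {set T}) : Prop :=
  exists (r : R) (z w : 'rV[R]_d), 0 < r /\
    (forall x, dist2 x z <= r ^+ 2 -> conv pos s x) /\
    (forall x, conv pos s x -> dist2 x w <= (alpha * r) ^+ 2).

(* graph (1-skeleton) of a simplicial decomposition *)
Definition mesh_edge (S : {set {set T}}) : rel T :=
  fun x y => (x != y) && [exists s in S, (x \in s) && (y \in s)].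

(* S is a well-shaped mesh: a decomposition of a domain of R^d into
   d-simplices (d+1 vertices, full-dimensional as they contain a ball) that
   meet only in common lower-dimensional faces, with aspect ratio <= alpha;
   every graph vertex is a vertex of some simplex, positions distinct, and
   the graph has maximum degree <= b. *)
Definition well_shaped_mesh (pos : T -> 'rV[R]_d) (S : {set {set T}})
    (alpha : R) (b : nat) : Prop :=
  [/\ injective pos,
      forall v, exists2 s, s \in S & v \in s,
      forall s, s \in S -> #|s| = d.+1 /\ aspect_le pos alpha s,
      forall s t, s \in S -> t \in S ->
        forall x, (conv pos s x /\ conv pos t x) <-> conv pos (s :&: t) x
    & forall v, #|[set y | mesh_edge S v y]| <= b]%N.

End Mesh.

Section Partition.
Variables (R : realType) (T : finType) (e : rel T).

(* |E(A,B)| for disjoint A, B *)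
Definition cut (A B : {set T}) : nat :=
  #|[set p : T * T | [&& p.1 \in A, p.2 \in B & e p.1 p.2]]|.

(* |outgoing(A)| w.r.t. G_p with vertex set Vp: edges from A to G - G_p *)
Definition outgoing (Vp A : {set T}) : nat := cut A (~: Vp).

(* acceptance criterion of the geometric separator step on H *)
Definition sep_ok (d : nat) (beta c : R) (H A B : {set T}) : Prop :=
  [/\ A :|: B = H, A :&: B = set0,
      (#|A|%:R <= beta * #|H|%:R), (#|B|%:R <= beta * #|H|%:R)
    & (cut A B)%:R <= c * powR (#|H|%:R) (1 - d%:R^-1)].

Inductive dtree := DLeaf of T | DNode of dtree & dtree.

Fixpoint leaves (t : dtree) : seq T :=
  match t with DLeaf v => [:: v] | DNode l r => leaves l ++ leaves r end.

Definition leafset (t : dtree) : {set T} := [set x | x \in leaves t].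

Fixpoint dtree_ok (d : nat) (beta c : R) (t : dtree) : Prop :=
  match t with
  | DLeaf _ => True
  | DNode l r => [/\ dtree_ok d beta c l, dtree_ok d beta c r
                   & sep_ok d beta c (leafset t) (leafset l) (leafset r)]
  end.

(* red-blue array: Some v = blue element of v, None = red element *)
Definition red_blue (Vp : {set T}) (t : dtree) : seq (option T) :=
  flatten [seq Some v :: nseq (outgoing Vp [set v]) None | v <- leaves t].

Definition nblue (s : seq (option T)) : nat := count (fun o => o != None) s.
Definition nred (s : seq (option T)) : nat := count (fun o => o == None) s.

Definition subarray (s : seq (option T)) (i j : nat) := take (j - i) (drop i s).

(* step (3): the subarray contains half the blue and half the red elements
   to within one *)
Definition half_within_one (part total : nat) : Prop :=
  (`|(2 * part)%:Z - total%:Z| <= 2)%R.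

Definition chosen_set (s : seq (option T)) : {set T} := [set v | Some v \in s].

(* (Vpx, Vpy) is a possible output of FullyBalancedPartition(G_p) *)
Definition FBP_output (d : nat) (eps c : R) (Vp Vpx Vpy : {set T}) : Prop :=
  exists (t : dtree) (i j : nat),
    let beta := (d%:R + 1 + eps) / (d%:R + 2) in
    let arr := red_blue Vp t in
    let sub := subarray arr i j in
    [/\ dtree_ok d beta c t, leafset t = Vp, (i <= j <= size arr)%N,
        half_within_one (nblue sub) (nblue arr) /\
        half_within_one (nred sub) (nred arr)
      & Vpx = chosen_set sub /\ Vpy = Vp :\: Vpx].

End Partition.

(* Main.v *)
Require Import Defs.
From HB Require Import structures.
From mathcomp Require Import all_boot all_order all_algebra.
From mathcomp Require Import reals exp.
From mathcomp.algebra_tactics Require Import ring lra.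
From mathcomp Require Import zify.
Import Order.TTheory GRing.Theory Num.Theory.
Set Implicit Arguments. Unset Strict Implicit. Unset Printing Implicit Defensive.

Section CutLemmas.
Variables (T : finType) (e : rel T).

Lemma cut_sub (A A' B B' : {set T}) :
  A \subset A' -> B \subset B' -> (cut e A B <= cut e A' B')%N.
Proof.
move=> sA sB; apply: subset_leq_card; apply/subsetP=> p.
rewrite !inE => /and3P[h1 h2 h3].
by rewrite (subsetP sA _ h1) (subsetP sB _ h2) h3.
Qed.

Lemma cut_set0l B : cut e set0 B = 0%N.
Proof. apply/eqP; rewrite cards_eq0; apply/eqP; apply/setP=> p; rewrite !inE. done. Qed.

Lemma cut_set0r A : cut e A set0 = 0%N.
Proof. by apply/eqP; rewrite cards_eq0; apply/eqP; apply/setP=> p; rewrite !inE andbF. Qed.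

Lemma cut_Ul A A' B : cut e (A :|: A') B =
  #|[set p : T * T | [&& p.1 \in A, p.2 \in B & e p.1 p.2]] :|:
    [set p : T * T | [&& p.1 \in A', p.2 \in B & e p.1 p.2]]|.
Proof.
rewrite /cut; apply: eq_card => p; rewrite !inE.
by rewrite andb_orl.
Qed.

Lemma cut_Ul_le A A' B : (cut e (A :|: A') B <= cut e A B + cut e A' B)%N.
Proof. by rewrite cut_Ul; apply: leq_card_setU. Qed.

Lemma cut_Ur_le A B B' : (cut e A (B :|: B') <= cut e A B + cut e A B')%N.
Proof.
rewrite /cut; apply: leq_trans (leq_card_setU _ _).
apply: subset_leq_card; apply/subsetP=> p; rewrite !inE.
by case/and3P=> -> /orP[] -> ->; rewrite ?orbT.
Qed.

Lemma cut_Ul_disj A A' B : A :&: A' = set0 ->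
  cut e (A :|: A') B = (cut e A B + cut e A' B)%N.
Proof.
move=> dis; rewrite cut_Ul cardsU.
set I := (_ :&: _); suff -> : I = set0 by rewrite cards0 subn0.
apply/setP=> p; rewrite !inE.
case h1: (p.1 \in A); case h2: (p.1 \in A'); rewrite /= ?andbF //.
by have := congr1 (fun X : {set T} => p.1 \in X) dis; rewrite !inE h1 h2.
Qed.

Hypothesis esym : symmetric e.

Lemma cutC A B : cut e A B = cut e B A.
Proof.
have sw : involutive (fun p : T * T => (p.2, p.1)) by case.
have H : forall A B, (cut e A B <= cut e B A)%N.
  move=> X Y; rewrite /cut -(card_imset _ (inv_inj sw)).
  apply: subset_leq_card; apply/subsetP=> q /imsetP[p]; rewrite !inE => /and3P[h1 h2 h3] ->/=.
  by rewrite h1 h2 esym h3.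
by apply/eqP; rewrite eqn_leq !H.
Qed.
End CutLemmas.

Lemma cat_split (X : Type) (s1 u L M : seq X) : s1 ++ u = L ++ M ->
  (exists w, L = s1 ++ w /\ u = w ++ M) \/ (exists w, s1 = L ++ w /\ M = w ++ u).
Proof.
elim: s1 L => [|x s1 IH] [|y L] /=.
- by move=> ->; left; exists [::].
- by move=> ->; left; exists (y :: L).
- by move=> <-; right; exists (x :: s1).
- case=> -> /IH [[w [-> ->]]|[w [-> ->]]].
  + by left; exists w.
  + by right; exists w.
Qed.

Local Open Scope ring_scope.
Section Tree.
Variables (R : realType) (T : finType) (e : rel T) (d : nat) (beta c : R).
Hypothesis e_sym : symmetric e.

Definition SS (s : seq T) : {set T} := [set x | x \in s].

Lemma SS_cat s t : SS (s ++ t) = SS s :|: SS t.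
Proof. by apply/setP=> x; rewrite !inE mem_cat. Qed.

Lemma SS_nil : SS [::] = set0.
Proof. by apply/setP=> x; rewrite !inE. Qed.

Lemma SS_sub s t : SS s \subset SS (s ++ t).
Proof. by rewrite SS_cat subsetUl. Qed.

Lemma SS_subr s t : SS t \subset SS (s ++ t).
Proof. by rewrite SS_cat subsetUr. Qed.

Lemma leafsetE t : leafset t = SS (leaves t).
Proof. by []. Qed.

Lemma uniq_leaves t : dtree_ok e d beta c t -> uniq (leaves t).
Proof.
elim: t => [v|l IHl r IHr] //= [okl okr [_ I _ _ _]].
rewrite cat_uniq IHl // IHr // andbT /=.
apply/hasPn=> x xr; apply/negP=> xl.
by have := congr1 (fun X : {set T} => x \in X) I; rewrite !inE /= xl xr.
Qed.

Variables (P : nat -> R) (bb K : R).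
Hypothesis P_ge0 : forall n, 0 <= P n.
Hypothesis hP : forall m n : nat, m%:R <= beta * n%:R -> P m <= bb * P n.
Hypothesis K_ge0 : 0 <= K.
Hypothesis hK : K * bb + c = K.
Hypothesis c_ge0 : 0 <= c.
Hypothesis hPd : forall n, P n = powR n%:R (1 - d%:R^-1).

Lemma natle3 (x y z : nat) : (x <= y + z)%N -> x%:R <= (y%:R + z%:R : R).
Proof. by move=> h; rewrite -natrD ler_nat. Qed.

Lemma hK' PH : K * (bb * PH) + c * PH = K * PH.
Proof. by rewrite mulrA -mulrDl hK. Qed.

Lemma comb1 (x y z : nat) (Pl PH : R) : (x <= y + z)%N -> y%:R <= K * Pl ->
  z%:R <= c * PH -> Pl <= bb * PH -> x%:R <= K * PH.
Proof.
move=> /natle3 h hy hz hl; have h2 : K * Pl <= K * (bb * PH) by rewrite ler_wpM2l.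
have := hK' PH; lra.
Qed.

Lemma comb2 (x y z : nat) (Pl PH : R) : (x <= y + z)%N -> y%:R <= 2 * K * Pl ->
  z%:R <= c * PH -> Pl <= bb * PH -> x%:R <= 2 * K * PH.
Proof.
move=> /natle3 h hy hz hl; have h2 : K * Pl <= K * (bb * PH) by rewrite ler_wpM2l.
have h3 : 0 <= c * PH by apply: le_trans hz.
have := hK' PH; rewrite -!mulrA in hy *; lra.
Qed.

Lemma comb4 (x y1 y2 y3 y4 : nat) (Pl Pr PH : R) : (x <= y1 + y2 + (y3 + y4))%N ->
  y1%:R <= K * Pl -> y2%:R <= c * PH -> y3%:R <= c * PH -> y4%:R <= K * Pr ->
  Pl <= bb * PH -> Pr <= bb * PH -> x%:R <= 2 * K * PH.
Proof.
move=> h hy1 hy2 hy3 hy4 hl hr.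
have h2 : K * Pl <= K * (bb * PH) by rewrite ler_wpM2l.
have h2' : K * Pr <= K * (bb * PH) by rewrite ler_wpM2l.
move: h; rewrite -(ler_nat R) !natrD => h.
have := hK' PH; rewrite -!mulrA; lra.
Qed.

Lemma pre_bound t : dtree_ok e d beta c t -> forall p q, leaves t = p ++ q ->
  (cut e (SS p) (SS q))%:R <= K * P #|leafset t|.
Proof.
elim: t => [v|l IHl r IHr].
  move=> _ [|x p] q /=.
    by move=> _; rewrite SS_nil cut_set0l mulr_ge0.
  case=> _; case: p => [|? ?] //; case: q => [|? ?] // _.
  by rewrite SS_nil cut_set0r mulr_ge0.
move=> /= [okl okr [_ _ hA hB hcut]] p q.
rewrite -/(leafset l) -/(leafset r) in hA hB hcut *.
set H := leafset (DNode l r) in hA hB hcut *.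
rewrite -hPd in hcut.
have hl := hP hA; have hr := hP hB.
move/esym/cat_split=> [[w [el eq]]|[w [ep er]]].
- rewrite eq SS_cat -/(leafset r).
  apply: (comb1 (cut_Ur_le _ _ _ _)) (IHl okl _ _ el) _ hl.
  apply: le_trans hcut; rewrite ler_nat; apply: cut_sub => //.
  by rewrite leafsetE el SS_sub.
- rewrite ep SS_cat -/(leafset l).
  apply: (@comb1 _ (cut e (SS w) (SS q)) (cut e (leafset l) (SS q)) _ _ _ (IHr okr _ _ er) _ hr).
    by rewrite addnC cut_Ul_le.
  apply: le_trans hcut; rewrite ler_nat; apply: cut_sub => //.
  by rewrite (leafsetE r) er SS_subr.
Qed.
Lemma suf_bound t : dtree_ok e d beta c t -> forall p q, leaves t = p ++ q ->
  (cut e (SS q) (SS p))%:R <= K * P #|leafset t|.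
Proof. by move=> ok p q h; rewrite cutC //; apply: pre_bound h. Qed.

Lemma int_bound t : dtree_ok e d beta c t -> forall s1 s2 s3, leaves t = s1 ++ s2 ++ s3 ->
  (cut e (SS s2) (SS s1 :|: SS s3))%:R <= 2 * K * P #|leafset t|.
Proof.
elim: t => [v|l IHl r IHr].
  move=> _ s1 [|x s2] s3 /=.
    by move=> _; rewrite SS_nil cut_set0l !mulr_ge0.
  case: s1 => [|y s1] /=; last first.
    by case=> _ /(congr1 size); rewrite /= size_cat /= addnS.
  case=> _; case: s3 => [|z s3]; last first.
    by move/(congr1 size); rewrite /= size_cat /= addnS.
  by move=> _; rewrite SS_nil setU0 cut_set0r !mulr_ge0.
move=> /= [okl okr [_ _ hA hB hcut]] s1 s2 s3.
rewrite -/(leafset l) -/(leafset r) in hA hB hcut *.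
set H := leafset (DNode l r) in hA hB hcut *.
rewrite -hPd in hcut.
have hl := hP hA; have hr := hP hB.
have hcut' : (cut e (leafset r) (leafset l))%:R <= c * P #|H| by rewrite cutC.
move/esym/cat_split=> [[w [el eq]]|[w [ep er]]].
- move: eq => /cat_split [[w' [ew e3]]|[w' [e2 er]]].
  + rewrite e3 SS_cat -/(leafset r) setUA.
    rewrite ew in el.
    apply: (comb2 (cut_Ur_le _ _ _ _)) (IHl okl _ _ _ el) _ hl.
    apply: le_trans hcut; rewrite ler_nat; apply: cut_sub => //.
    by apply/subsetP=> x; rewrite leafsetE el !inE !mem_cat => ->; rewrite orbT.
  + rewrite e2 SS_cat.
    have H1 := cut_Ul_le e (SS w) (SS w') (SS s1 :|: SS s3).
    have H2 := cut_Ur_le e (SS w) (SS s1) (SS s3).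
    have H3 := cut_Ur_le e (SS w') (SS s1) (SS s3).
    apply: (@comb4 _ (cut e (SS w) (SS s1)) (cut e (SS w) (SS s3))
              (cut e (SS w') (SS s1)) (cut e (SS w') (SS s3)) _ _ _ _ _ _ _ _ hl hr).
    * by apply: leq_trans H1 _; apply: leq_add.
    * exact: suf_bound el.
    * apply: le_trans hcut; rewrite ler_nat; apply: cut_sub.
        by rewrite leafsetE el SS_subr.
      by rewrite leafsetE er SS_subr.
    * apply: le_trans hcut'; rewrite ler_nat; apply: cut_sub.
        by rewrite leafsetE er SS_sub.
      by rewrite leafsetE el SS_sub.
    * exact: pre_bound er.
- rewrite ep SS_cat -/(leafset l) -setUA.
  apply: (@comb2 _ (cut e (SS s2) (SS w :|: SS s3)) (cut e (SS s2) (leafset l)) _ _ _ (IHr okr _ _ _ er) _ hr).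
    by rewrite addnC cut_Ur_le.
  apply: le_trans hcut'; rewrite ler_nat; apply: cut_sub => //.
  by apply/subsetP=> x; rewrite leafsetE er !inE !mem_cat => ->; rewrite orbT.
Qed.
End Tree.

Section Array.
Local Open Scope nat_scope.
Variables (T : finType) (o : T -> nat) (b : nat).
Hypothesis o_le : forall v, (o v <= b)%N.

Definition rb (s : seq T) : seq (option T) :=
  flatten [seq Some v :: nseq (o v) None | v <- s].

Lemma rb_cons v s : rb (v :: s) = Some v :: nseq (o v) None ++ rb s.
Proof. by []. Qed.

Lemma pmap_nseq n : pmap id (nseq n (@None T)) = [::].
Proof. by elim: n. Qed.

Lemma pmap_rb s : pmap id (rb s) = s.
Proof. by elim: s => // v s IH; rewrite rb_cons /= pmap_cat pmap_nseq IH. Qed.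

Lemma nblueE (x : seq (option T)) : nblue x = size (pmap id x).
Proof. by elim: x => //= [[v|] x IH]; rewrite /nblue /= -/(nblue x) IH. Qed.

Lemma nred_cat (x y : seq (option T)) : nred (x ++ y) = (nred x + nred y)%N.
Proof. by rewrite /nred count_cat. Qed.

Lemma nred_nseq n : nred (nseq n (@None T)) = n.
Proof. by rewrite /nred count_nseq /= mul1n. Qed.

Lemma nred_some v (x : seq (option T)) : nred (Some v :: x) = nred x.
Proof. by []. Qed.

Lemma nred_rb s : nred (rb s) = (\sum_(v <- s) o v)%N.
Proof.
elim: s => [|v s IH]; first by rewrite big_nil.
by rewrite rb_cons nred_some nred_cat nred_nseq IH big_cons.
Qed.

Lemma prefix_red s k :
  ((\sum_(v <- pmap id (take k (rb s))) o v <= nred (take k (rb s)) + b)%N /\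
   (nred (take k (rb s)) <= \sum_(v <- pmap id (take k (rb s))) o v)%N).
Proof.
elim: s k => [|v s IH] k; first by rewrite /= big_nil.
case: k => [|k]; first by rewrite take0 big_nil.
rewrite rb_cons /= add0n big_cons take_cat size_nseq.
case: ltnP => hk.
  rewrite take_nseq ?(ltnW hk) // pmap_nseq nred_nseq big_nil addn0.
  by split; [apply: leq_trans (o_le v) (leq_addl _ _)|apply: ltnW].
rewrite pmap_cat pmap_nseq /= nred_cat nred_nseq.
have [h1 h2] := IH (k - o v).
by split; rewrite ?leq_add2l // -addnA leq_add2l.
Qed.

End Array.

Local Open Scope ring_scope.

Lemma fin_arith (R : realType) (X Y r N bb : nat) : (X + Y = N)%N -> (r <= X + bb)%N -> (X <= r + bb)%N ->
  (`|(2 * r)%:Z - N%:Z| <= 2)%R -> `|X%:R - Y%:R| <= (2 * bb + 2)%:R :> R.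
Proof.
move=> hN h1 h2 h3.
have [h4 h5] : (2 * r <= N + 2)%N /\ (N <= 2 * r + 2)%N by lia.
move: h1 h2 h4 h5; rewrite -!(ler_nat R) !natrD ?natrM -hN ?natrD ?natrM => h1 h2 h4 h5.
rewrite ler_norml; apply/andP; split; lra.
Qed.

Lemma SS_cons (T : finType) (v : T) s : SS (v :: s) = [set v] :|: SS s.
Proof. by apply/setP=> x; rewrite !inE. Qed.

Lemma cut_SS (T : finType) (e : rel T) (s : seq T) D : uniq s ->
  cut e (SS s) D = (\sum_(v <- s) cut e [set v] D)%N.
Proof.
elim: s => [|v s IH] /=; first by rewrite SS_nil cut_set0l big_nil.
case/andP=> vs us; rewrite SS_cons cut_Ul_disj ?IH ?big_cons //.
apply/setP=> x; rewrite !inE; apply/negP=> /andP[/eqP -> ]; exact/negP.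
Qed.

Lemma mesh_sym (T : finType) (S : {set {set T}}) : symmetric (mesh_edge S).
Proof.
move=> x y; rewrite /mesh_edge eq_sym; congr (_ && _).
by apply: eq_existsb => s; rewrite (andbC (x \in s)).
Qed.

Lemma out1_le (T : finType) (e : rel T) Vp v (b : nat) :
  (#|[set y | e v y]| <= b)%N -> (outgoing e Vp [set v] <= b)%N.
Proof.
move=> h; apply: leq_trans h; rewrite /outgoing /cut.
apply: leq_trans (leq_imset_card (fun y => (v, y)) _).
apply: subset_leq_card; apply/subsetP=> [[x y]]; rewrite !inE /= => /and3P[/eqP -> _ hy].
by apply/imsetP; exists y; rewrite ?inE.
Qed.

Theorem lemma4 (R : realType) (d b : nat) (alpha eps c : R) :
  (1 < d)%N -> 0 < eps < 1 -> 0 < c ->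
  exists C : R, 0 < C /\
  forall (T : finType) (pos : T -> 'rV[R]_d) (S : {set {set T}})
         (Vp Vpx Vpy : {set T}),
    well_shaped_mesh pos S alpha b ->
    FBP_output (mesh_edge S) d eps c Vp Vpx Vpy ->
    [/\ (cut (mesh_edge S) Vpx Vpy)%:R <= C * powR (#|Vp|%:R) (1 - d%:R^-1),
        `|(#|Vpx|%:R - #|Vpy|%:R : R)| <= C
      & `|((outgoing (mesh_edge S) Vp Vpx)%:R
            - (outgoing (mesh_edge S) Vp Vpy)%:R : R)| <= C].
Proof.
move=> d1 /andP[eps0 eps1] c0.
set a := 1 - d%:R^-1.
set beta := (d%:R + 1 + eps) / (d%:R + 2).
have dpos : 0 < d%:R :> R by rewrite ltr0n; apply: ltn_trans d1.
have a0 : 0 < a by rewrite subr_gt0 invf_lt1 // ltr1n.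
have beta0 : 0 <= beta by apply: divr_ge0; lra.
have beta1 : beta < 1 by rewrite ltr_pdivrMr; lra.
set bb := powR beta a.
have bb0 : 0 <= bb by apply: powR_ge0.
have bb1 : bb < 1.
  have := gt0_ltr_powR a0 _ _ beta1; rewrite powR1; apply; by rewrite nnegrE.
set K := c / (1 - bb).
have K0 : 0 <= K by apply: divr_ge0; lra.
have hK : K * bb + c = K.
  rewrite /K; field; lra.
set P := fun n : nat => powR n%:R a.
have P0 : forall n, 0 <= P n by move=> n; apply: powR_ge0.
have hP : forall m n : nat, m%:R <= beta * n%:R -> P m <= bb * P n.
  move=> m n h; rewrite /P /bb -powRM //.
  apply: ge0_ler_powR => //; first exact: ltW.
    by rewrite nnegrE.
  by rewrite nnegrE mulr_ge0.
have hPd : forall n, P n = powR n%:R (1 - d%:R^-1) by [].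
exists (2 * K + (2 * b + 2)%:R); split.
  apply: ltr_wpDl; first by rewrite mulr_ge0.
  by rewrite ltr0n addn2.
move=> T pos S Vp Vpx Vpy [_ _ _ _ deg] [t [i [j]]] /=.
case=> ok tVp /andP[ij jsz] [hb hr] [ex ey].
set e := mesh_edge S.
have esym : symmetric e by apply: mesh_sym.
set o := fun v => outgoing e Vp [set v].
have o_le : forall v, (o v <= b)%N by move=> v; apply: out1_le.
set arr := red_blue e Vp t.
have arrE : arr = rb o (leaves t) by [].
set sub := subarray arr i j in hb hr ex.
have tj : take j arr = take i arr ++ sub by rewrite /sub /subarray -takeD subnKC.
set s1 := pmap id (take i arr).
set s2 := pmap id sub.
set s3 := pmap id (drop j arr).
have hL : leaves t = s1 ++ s2 ++ s3.
  by rewrite -{1}(pmap_rb o (leaves t)) -arrE -(cat_take_drop j arr) tj !pmap_cat catA.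
have uL : uniq (leaves t) by apply: uniq_leaves ok.
move: (uL); rewrite hL cat_uniq => /and3P[u1 /hasPn d1s u23].
move: u23; rewrite cat_uniq => /and3P[u2 /hasPn d23 u3].
have hVp : Vp = SS (leaves t) by rewrite -tVp.
have hVpx : Vpx = SS s2.
  by rewrite ex; apply/setP=> x; rewrite !inE mem_pmap map_id.
have hVpy : Vpy = SS s1 :|: SS s3.
  rewrite ey hVp hVpx hL; apply/setP=> x; rewrite !inE !mem_cat.
  case x2: (x \in s2) => /=.
    have n1 : x \notin s1 by apply: d1s; rewrite mem_cat x2.
    have n3 : x \notin s3 by apply/negP=> x3; move: (d23 _ x3); rewrite /= x2.
    by rewrite (negPf n1) (negPf n3).
  by [].
have C2K : forall y : R, 0 <= y -> 2 * K * y <= (2 * K + (2 * b + 2)%:R) * y.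
  by move=> y y0; rewrite ler_wpM2r // lerDl.
have Cge : forall z : nat, (z <= 2 * b + 2)%N -> z%:R <= 2 * K + (2 * b + 2)%:R.
  move=> z hz; have h1 : z%:R <= (2 * b + 2)%:R :> R by rewrite ler_nat.
  have h2 : 0 <= K by []. lra.
split.
- rewrite hVpx hVpy.
  apply: le_trans (C2K _ (P0 _)).
  by rewrite -tVp; apply: (int_bound esym P0 hP K0 hK hPd ok hL).
- have sVpx : Vpx \subset Vp.
    by rewrite hVpx hVp hL; apply/subsetP=> x; rewrite !inE !mem_cat => ->; rewrite orbT.
  have cX : #|Vpx| = size s2 by rewrite hVpx /SS cardsE (card_uniqP u2).
  have cXY : (#|Vpx| + #|Vpy| = #|Vp|)%N.
    by rewrite ey -{1}(setIidPr sVpx) cardsID.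
  have cVp : #|Vp| = nblue arr.
    by rewrite nblueE arrE pmap_rb hVp /SS cardsE (card_uniqP uL).
  have cs : nblue sub = #|Vpx| by rewrite nblueE cX.
  apply: le_trans (Cge 2%N _); last by rewrite leq_addl.
  apply: (@fin_arith R _ _ (nblue sub) (nblue arr) 0); rewrite ?cs ?addn0 //.
    by rewrite cXY cVp.
  by move: hb; rewrite /half_within_one cs.
- have sVpx : Vpx \subset Vp.
    by rewrite hVpx hVp hL; apply/subsetP=> x; rewrite !inE !mem_cat => ->; rewrite orbT.
  have UXY : Vpx :|: Vpy = Vp.
    apply/setP=> x; rewrite ey !inE; case xX: (x \in Vpx) => //=.
    by rewrite (subsetP sVpx _ xX).
  have IXY : Vpx :&: Vpy = set0.
    by apply/setP=> x; rewrite ey !inE; case: (x \in Vpx).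
  have hXY : (outgoing e Vp Vpx + outgoing e Vp Vpy = nred arr)%N.
    rewrite /outgoing -cut_Ul_disj // UXY arrE nred_rb {1}hVp cut_SS //.
  have hX : outgoing e Vp Vpx = (\sum_(v <- s2) o v)%N.
    by rewrite /outgoing hVpx cut_SS.
  have [pi1 pi2] := prefix_red o_le (leaves t) i.
  have [pj1 pj2] := prefix_red o_le (leaves t) j.
  rewrite -arrE in pi1 pi2 pj1 pj2.
  have bc : (\sum_(v <- s1 ++ s2) o v = \sum_(v <- s1) o v + \sum_(v <- s2) o v)%N.
    by rewrite big_cat.
  rewrite tj pmap_cat nred_cat -/s1 -/s2 bc in pj1 pj2.
  rewrite -/s1 in pi1 pi2.
  apply: le_trans (Cge (2 * b + 2)%N (leqnn _)).
  apply: (@fin_arith R _ _ (nred sub) (nred arr) b hXY) => //; rewrite hX.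
    move: pi1 pi2 pj1 pj2; move: (nred (take i arr)) (nred sub) (\sum_(v <- s1) o v) (\sum_(v <- s2) o v) => A B C D.
    clear; lia.
  move: pi1 pi2 pj1 pj2; move: (nred (take i arr)) (nred sub) (\sum_(v <- s1) o v) (\sum_(v <- s2) o v) => A B C D.
  clear; lia.
Qed.
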